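(* Let $s>0$ be real, and let $n\ge2$ and $r\ge1$ be integers. Let $N=\min(n+r,\,2n-1)$. Then there exist a finite graph $G$ that is a vertex-disjoint union of $r$ cycles (so $\mathrm{FvsNum}(G)=r$) and $n$ agents with additive valuations such that no $s$-separated allocation $(A_1,\dots,A_n)$ satisfies $v_i(A_i)\ge\mathrm{MMS}_i^{N-1,s}$ for every $i\in[n]$. The same holds if zero-valued tree components are added to $G$.
   Context: Cake model: the cake is a finite undirected graph $G$ whose edges are segments of positive length; points of $G$ are its vertices and the points on its edges. A piece of cake is a finite union of intervals contained in edges, together possibly with some vertices. A piece $X$ is connected if any two points of $X$ can be joined by a path in $G$ that stays inside $X$. An additive valuation is a nonatomic measure on the cake. Distances: $\mathrm{Dist}^G(x,y)$ is the length of a shortest path along the edges, and is $\infty$ if $x$ and $y$ lie in different components. For sets, $\mathrm{Dist}^G(X,Y)=\inf_{x\in X,y\in Y}\mathrm{Dist}^G(x,y)$. Separation: a $k$-partition is $s$-separated if it consists of $k$ pairwise disjoint connected pieces $P_1,\dots,P_k$ with $\mathrm{Dist}^G(P_i,P_j)\ge s$ for $i\ne j$. An $s$-separated allocation is a vector of connected pieces satisfying the same condition. Maximin share: $\mathrm{MMS}_i^{k,s}=\sup\min_{j\in[k]}v_i(P_j)$, where the supremum ranges over $s$-separated $k$-partitions. $\mathrm{FvsNum}(G)$ is the minimum number of vertices whose removal from $G$ leaves an acyclic graph. *)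

(* Defs.v *)
From mathcomp Require Export all_boot all_order all_algebra.
From mathcomp Require Export all_classical all_reals all_analysis.
From Stdlib Require List.
Set Implicit Arguments. Unset Strict Implicit. Unset Printing Implicit Defensive.
Import Order.TTheory GRing.Theory Num.Theory.
Local Open Scope classical_set_scope.
Local Open Scope ring_scope.

(* The cake: a finite undirected (multi)graph whose edges are segments *)
(* of positive length.  Each edge [e] is parametrised by [t] in       *)
(* [0, glen e]; t = 0 is the vertex [gsrc e], t = glen e is [gtgt e]. *)
Record graph (R : realType) := Graph {
  gV : finType;
  gE : finType;
  gsrc : gE -> gV;
  gtgt : gE -> gV;
  glen : gE -> R;
  glen_pos : forall e, 0 < glen e }.

Section Cake.
Variable R : realType.
Variable G : graph R.

Inductive point := Vtx of gV G | Inn of gE G & R.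

(* the point of edge e at parameter t (t is meant to lie in [0, glen e]) *)
Definition pt (e : gE G) (t : R) : point :=
  if t <= 0 then Vtx (gsrc e)
  else if glen e <= t then Vtx (gtgt e)
  else Inn e t.

Definition is_piece (X : set point) : Prop :=
  exists (I : seq (gE G * interval R)) (W : seq (gV G)),
    (forall eJ, eJ \in I -> forall t, t \in eJ.2 -> 0 <= t <= glen eJ.1) /\
    X = [set x | (exists2 eJ, eJ \in I & exists2 t, t \in eJ.2 & x = pt eJ.1 t)
                 \/ (exists2 w, w \in W & x = Vtx w)].

(* Paths along edges: sequences of segments (e, a, b), traversing edge e
   from parameter a to parameter b, consecutive segments glued at points. *)
Record seg := Seg { sedge : gE G; sfrom : R; sto : R }.

Fixpoint walk (x y : point) (p : seq seg) : Prop :=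
  match p with
  | [::] => x = y
  | sg :: p' =>
      [/\ 0 <= sfrom sg <= glen (sedge sg), 0 <= sto sg <= glen (sedge sg),
          x = pt (sedge sg) (sfrom sg) & walk (pt (sedge sg) (sto sg)) y p']
  end.

Definition inside (X : set point) (p : seq seg) : Prop :=
  forall sg, List.In sg p -> forall t,
    Num.min (sfrom sg) (sto sg) <= t <= Num.max (sfrom sg) (sto sg) ->
    X (pt (sedge sg) t).

Definition plen (p : seq seg) : R := \sum_(sg <- p) `|sto sg - sfrom sg|.

Definition connected_piece (X : set point) : Prop :=
  forall x y, X x -> X y -> exists p, walk x y p /\ inside X p.

(* Dist^G(x, y): length of a shortest path, +oo if none. *)
Definition Dist (x y : point) : \bar R :=
  ereal_inf [set d | exists p, walk x y p /\ d = (plen p)%:E].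

Definition DistS (X Y : set point) : \bar R :=
  ereal_inf [set d | exists x y, [/\ X x, Y y & d = Dist x y]].

(* Additive valuation: nonatomic finite measure on the cake, given by a
   nonatomic Borel measure on each edge parameter interval ]0, glen e[
   (vertices, being single points, carry no mass). *)
Record valuation := Valuation {
  vmu : gE G -> {measure set R -> \bar R};
  vmu_fin : forall e, (vmu e `]0%R, glen e[%classic < +oo)%E;
  vmu_nonatomic : forall e (x : R), vmu e [set x] = 0%E }.

Definition val (v : valuation) (X : set point) : \bar R :=
  (\sum_(e : gE G) vmu v e [set t | (0 < t < glen e)%R /\ X (Inn e t)])%E.

Definition separated (k : nat) (s : R) (P : 'I_k -> set point) : Prop :=
  (forall j, is_piece (P j) /\ connected_piece (P j)) /\
  (forall i j, i != j -> P i `&` P j = set0 /\ (s%:E <= DistS (P i) (P j))%E).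

Definition MMS (v : valuation) (k : nat) (s : R) : \bar R :=
  ereal_sup [set m | exists P : 'I_k -> set point,
     separated s P /\ m = \big[Order.min/+oo%E]_(j < k) val v (P j)].

End Cake.

Arguments Vtx {R G}.
Arguments Inn {R G}.

Definition gsum (R : realType) (G F : graph R) : graph R :=
  @Graph R (gV G + gV F)%type (gE G + gE F)%type
    (fun e => match e with inl e => inl (gsrc e) | inr e => inr (gsrc e) end)
    (fun e => match e with inl e => inl (gtgt e) | inr e => inr (gtgt e) end)
    (fun e => match e with inl e => glen e | inr e => glen e end)
    (fun e => match e with inl e => glen_pos e | inr e => glen_pos e end).

Definition joins (R : realType) (G : graph R) (e : gE G) (x y : gV G) : Prop :=
  (gsrc e = x /\ gtgt e = y) \/ (gsrc e = y /\ gtgt e = x).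

(* G is a vertex-disjoint union of r cycles (each cycle simple, of length
   >= 3): the vertex set is partitioned by r cyclic sequences cs, and the
   edges are exactly one edge between each pair of cyclically consecutive
   vertices. *)
Definition cycle_union (R : realType) (G : graph R) (r : nat) : Prop :=
  exists cs : seq (seq (gV G)),
    [/\ size cs = r,
        all (fun c => 2 < size c)%N cs,
        uniq (flatten cs),
        (forall v, v \in flatten cs) &
        ((forall e, exists2 c, c \in cs & gsrc e \in c /\
                    (gtgt e = next c (gsrc e) \/ gsrc e = next c (gtgt e))) /\
        (forall c x, c \in cs -> x \in c ->
           exists! e, joins e x (next c x)))].

(* acyclic graph (a forest): no cycle, i.e. no cyclic sequence of k+1
   distinct edges through k+1 distinct vertices (k = 0: a loop;
   k = 1: two parallel edges). *)
Definition acyclic (R : realType) (G : graph R) : Prop :=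
  forall (k : nat) (es : 'I_k.+1 -> gE G) (vs : 'I_k.+1 -> gV G),
    injective es -> injective vs ->
    ~ (forall i, joins (es i) (vs i) (vs (ordS i))).

Definition ext_mu (R : realType) (G F : graph R) (v : valuation G)
  (e : gE (gsum G F)) : {measure set R -> \bar R} :=
  match e with inl e => vmu v e | inr _ => mzero end.

Lemma ext_mu_fin (R : realType) (G F : graph R) (v : valuation G) e :
  (@ext_mu R G F v e `]0%R, @glen R (gsum G F) e[%classic < +oo)%E.
Proof. by case: e => [e|e] /=; [exact: vmu_fin | rewrite /mzero]. Qed.

Lemma ext_mu_nonatomic (R : realType) (G F : graph R) (v : valuation G) e (x : R) :
  @ext_mu R G F v e [set x] = 0%E.
Proof. by case: e => [e|e] /=; [exact: vmu_nonatomic | rewrite /mzero]. Qed.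

Definition ext_val (R : realType) (G F : graph R) (v : valuation G)
  : valuation (gsum G F) :=
  @Valuation R (gsum G F) (@ext_mu R G F v) (@ext_mu_fin R G F v)
             (@ext_mu_nonatomic R G F v).

Definition sep_alloc (R : realType) (G : graph R) (n : nat) (s : R)
  (A : 'I_n -> set (point G)) : Prop := separated s A.

(* Main.v *)
Require Import Defs.
From HB Require Import structures.
From mathcomp Require Import ring lra zify.
Import Order.TTheory GRing.Theory Num.Theory.
Local Open Scope classical_set_scope.
Local Open Scope ring_scope.

Section Lip.
Variable R : realType.
Lemma min_lip (a b a' b' d : R) : `|a - a'| <= d -> `|b - b'| <= d ->
  `|Num.min a b - Num.min a' b'| <= d.
Proof.
rewrite !ler_norml => /andP[h1 h2] /andP[h3 h4].
have [hab|hab] := leP a b; have [hab'|hab'] := leP a' b';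
  rewrite ?(min_l (ltW _)) ?min_l // ?min_r ?(ltW hab) ?(ltW hab') //;
  apply/andP; split; lra.
Qed.

Definition gfun (L c u : R) := Num.min `|u - c| (L - `|u - c|).

Lemma gfun_lip L c u u' : `|gfun L c u - gfun L c u'| <= `|u - u'|.
Proof.
have h : `| `|u - c| - `|u' - c| | <= `|u - u'|.
  apply: le_trans (ler_dist_dist _ _) _.
  have -> : u - c - (u' - c) = u - u' by ring.
  by [].
apply: min_lip => //.
have -> : L - `|u - c| - (L - `|u' - c|) = - (`|u - c| - `|u' - c|).
  by ring.
by rewrite normrN.
Qed.
End Lip.
Arguments gfun {R}.
Arguments gfun_lip {R}.
Arguments min_lip {R}.
Section Generic.
Variable R : realType.
Variable H : graph R.

Lemma pt0 (e : gE H) : pt e 0 = Vtx (gsrc e).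
Proof. by rewrite /pt lexx. Qed.

Lemma ptl (e : gE H) : pt e (glen e) = Vtx (gtgt e).
Proof. by rewrite /pt lexx leNgt glen_pos. Qed.

Lemma ptI (e : gE H) t : 0 < t -> t < glen e -> pt e t = Inn e t.
Proof. by move=> h1 h2; rewrite /pt leNgt h1 /= leNgt h2. Qed.

Lemma walk_cat x y z (p p' : seq (seg H)) :
  walk x y p -> walk y z p' -> walk x z (p ++ p').
Proof.
elim: p x => [|sg p IH] x /=; first by move=> ->.
by case=> h1 h2 h3 h4 h5; split => //; apply: IH.
Qed.

Lemma plen_cat (p p' : seq (seg H)) : plen (p ++ p') = plen p + plen p'.
Proof. by rewrite /plen big_cat. Qed.

Lemma plen_cons sg (p : seq (seg H)) : plen (sg :: p) = `|sto sg - sfrom sg| + plen p.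
Proof. by rewrite /plen big_cons. Qed.

Lemma plen_nil : @plen R H [::] = 0.
Proof. by rewrite /plen big_nil. Qed.

Lemma Dist_le (x y : point H) (p : seq (seg H)) : walk x y p -> (Dist x y <= (plen p)%:E)%E.
Proof. by move=> w; apply: ge_ereal_inf; exists (plen p)%:E => //; exists p. Qed.

Lemma DistS_le (X Y : set (point H)) x y : X x -> Y y -> (DistS X Y <= Dist x y)%E.
Proof. by move=> hx hy; apply: ge_ereal_inf; exists (Dist x y) => //; exists x, y. Qed.

Lemma Dist_ge (d : R) (x y : point H) : (forall p, walk x y p -> d <= plen p) -> (d%:E <= Dist x y)%E.
Proof.
move=> h; apply: le_ereal_inf_tmp => _ [p [w ->]].
by rewrite lee_fin; apply: h.
Qed.

Lemma DistS_ge (d : R) (X Y : set (point H)) :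
  (forall x y, X x -> Y y -> (d%:E <= Dist x y)%E) -> (d%:E <= DistS X Y)%E.
Proof. by move=> h; apply: le_ereal_inf_tmp => _ [x [y [hx hy ->]]]; apply: h. Qed.

Lemma walk_lip (phi : point H -> R) :
  (forall e a b, 0 <= a <= glen e -> 0 <= b <= glen e ->
     `|phi (pt e b) - phi (pt e a)| <= `|b - a|) ->
  forall (p : seq (seg H)) x y, walk x y p -> `|phi y - phi x| <= plen p.
Proof.
move=> hl; elim=> [|sg p IH] x y /=.
  by move=> ->; rewrite subrr normr0 plen_nil.
case=> ha hb -> w; rewrite plen_cons.
have := IH _ _ w; have := hl (sedge sg) _ _ ha hb.
set u := phi y; set v := phi (pt _ (sto _)); set z := phi (pt _ (sfrom _)).
move=> h1 h2.
have -> : u - z = (u - v) + (v - z) by rewrite addrA subrK.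
apply: (le_trans (ler_normD _ _)).
by rewrite addrC; apply: lerD.
Qed.
End Generic.
Arguments DistS_le {R H X Y x y}.
Arguments Dist_le {R H x y p}.

Section Spot.
Variable R : realType.
Variables a b : R.
Definition spot (A : set R) : \bar R :=
  (@lebesgue_measure R) (A `&` `[a,b]).
Let mD : measurable (`[a,b]%classic : set (measurableTypeR R)).
Proof. exact: measurable_itv. Qed.
Let spot0 : spot set0 = 0%E.
Proof. by rewrite /spot set0I measure0. Qed.
Let spot_ge0 A : (0 <= spot A)%E.
Proof. exact: measure_ge0. Qed.
Let spot_ssa : semi_sigma_additive spot.
Proof. exact: (@measure_semi_sigma_additive _ _ _ (mrestr (@lebesgue_measure R) mD)). Qed.
HB.instance Definition _ := isMeasure.Build _ R R spot spot0 spot_ge0 spot_ssa.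
Definition spotm : {measure set R -> \bar R} := spot.

Lemma spot_full (A : set R) : a <= b -> `[a, b]%classic `<=` A -> spotm A = (b - a)%:E.
Proof.
move=> ab sub; rewrite /= /spot setIidr //.
rewrite lebesgue_measure_itv /= lte_fin.
by case: ltgtP ab => // -> _; rewrite subrr.
Qed.

Lemma spot_ex (A : set R) : spotm A <> 0%E -> exists t, A t /\ a <= t <= b.
Proof.
move=> h; apply: contra_notP h => h.
rewrite /= /spot; suff -> : A `&` `[a, b] = set0 by rewrite measure0.
apply/seteqP; split => // t [At]; rewrite /= in_itv /= => tab.
by apply: h; exists t.
Qed.

Lemma spot_set1 x : spotm [set x] = 0%E.
Proof.
rewrite /= /spot; apply: (subset_measure0 _ _ (@subIsetl _ _ _)).
- by apply: measurableI => //; exact: measurable_itv.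
- exact: measurable_set1.
- exact: lebesgue_measure_set1.
Qed.
End Spot.

Section Construction.
Variables (R : realType) (s : R) (n r : nat).
Hypotheses (hs : 0 < s) (hn : (2 <= n)%N) (hr : (1 <= r)%N).

Definition rp := minn r n.-1.
Definition KK := (n - rp + 1)%N.
Definition MM := (2 * KK * n)%N.
Definition qq (j : nat) := if j == 0%N then (2 * n)%N else (KK * n)%N.
Definition mm (j : nat) := if j == 0%N then KK else 2%N.
Definition ell (j : nat) : R := 4 * s / (4 * (qq j)%:R - 1).
Definition lo j := 3 * ell j / 8.
Definition hi j := 5 * ell j / 8.
Definition musel (i j a : nat) : {measure set R -> \bar R} :=
  if (j < rp)%N && ((a %% qq j)%N == i) then @spotm R (lo j) (hi j) else mzero.

Lemma rp_ge1 : (1 <= rp)%N.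
Proof. rewrite /rp leq_min hr /=; case: n hn => // [[]] //. Qed.
Lemma rp_le : (rp <= r)%N /\ (rp <= n.-1)%N.
Proof. by rewrite /rp geq_minl geq_minr. Qed.
Lemma KK_ge2 : (2 <= KK)%N.
Proof. have [_ h] := rp_le; rewrite /KK; case: n hn h => // m _ /= h; lia. Qed.
Lemma qq_ge j : (n <= qq j)%N.
Proof. have := KK_ge2; rewrite /qq; case: eqP => _ h; nia. Qed.
Lemma MM_eq j : MM = (mm j * qq j)%N.
Proof. by rewrite /MM /mm /qq; case: eqP => _; ring. Qed.
Lemma MM_pos : (0 < MM)%N.
Proof. have := KK_ge2; rewrite /MM; nia. Qed.
Lemma qq_lt_MM j : (qq j < MM)%N.
Proof. have := qq_ge j; rewrite (MM_eq j) /mm; have := KK_ge2; case: eqP => _; nia. Qed.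

Lemma qqR_ge j : (2 : R) <= (qq j)%:R.
Proof. by rewrite (ler_nat R 2); apply: leq_trans hn (qq_ge j). Qed.

Lemma ell_pos j : 0 < ell j.
Proof. have := qqR_ge j => h; rewrite /ell; apply: divr_gt0; move: hs => ?; lra. Qed.

Lemma s_ell j : 4 * s = (4 * (qq j)%:R - 1) * ell j.
Proof.
have := qqR_ge j => h; rewrite /ell; field.
apply/eqP => h'; lra.
Qed.

Definition kk := (minn (n + r) (2 * n - 1)).-1.
Definition jd (p : nat) := if (p < KK)%N then 0%N else ((p - KK) %/ 2).+1.
Definition bd (p : nat) := if (p < KK)%N then p else ((p - KK) %% 2)%N.
Definition ad (i p : nat) := (i + bd p * qq (jd p))%N.

Lemma kk_eq : kk = (KK + 2 * (rp - 1))%N.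
Proof.
have := rp_le; have := rp_ge1; rewrite /kk /KK /rp => h1 [h2 h3].
rewrite -subn1; move: h1 h2 h3; rewrite -subn1; lia.
Qed.

Lemma jd_lt p : (p < kk)%N -> (jd p < rp)%N.
Proof.
rewrite kk_eq /jd => h; have := rp_ge1; case: ifP => // hp _.
have : ((p - KK) %/ 2 < rp - 1)%N by rewrite ltn_divLR //; lia.
lia.
Qed.

Lemma bd_lt p : (p < kk)%N -> (bd p < mm (jd p))%N.
Proof. by rewrite /bd /jd /mm; case: ifP => // _ _; rewrite ltn_mod. Qed.

Lemma ad_lt (i : 'I_n) p : (p < kk)%N -> (ad i p < MM)%N.
Proof.
move=> hp; have := bd_lt _ hp; have := qq_ge (jd p); rewrite /ad (MM_eq (jd p)).
have := ltn_ord i; move: (bd p) (qq (jd p)) (mm (jd p)) => b q m hi hq hb; nia.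
Qed.

Lemma ad_mod (i : 'I_n) p : ((ad i p) %% qq (jd p) = i)%N.
Proof.
rewrite /ad addnC modnMDl modn_small //; apply: leq_trans (qq_ge _); exact: ltn_ord.
Qed.

Lemma jd_bd_inj p p' : (p < kk)%N -> (p' < kk)%N -> jd p = jd p' -> bd p = bd p' -> p = p'.
Proof.
rewrite /jd /bd => _ _; case: ifP => h1; case: ifP => h2 //=.
move=> [e1] e2.
have := divn_eq (p - KK) 2; have := divn_eq (p' - KK) 2; rewrite e1 e2; lia.
Qed.

Lemma nat_dist (x y m : nat) : (x < m)%N -> (y < m)%N -> x != y ->
  (1 : R) <= `|(y%:R : R) - x%:R| <= m%:R - 1.
Proof.
move=> hx hy hxy.
have X1 : (x%:R : R) + 1 <= m%:R by rewrite natr1 ler_nat.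
have Y1 : (y%:R : R) + 1 <= m%:R by rewrite natr1 ler_nat.
have X0 : (0 : R) <= x%:R by [].
have Y0 : (0 : R) <= y%:R by [].
case: (ltngtP x y) => h; last by rewrite h eqxx in hxy.
  have : (x%:R : R) + 1 <= y%:R by rewrite natr1 ler_nat.
  move=> h'; rewrite ger0_norm; last by lra.
  by apply/andP; split; lra.
have : (y%:R : R) + 1 <= x%:R by rewrite natr1 ler_nat.
move=> h'; rewrite ler0_norm; last by lra.
by apply/andP; split; lra.
Qed.

Section OnH.
Variable H : graph R.
Variables (ce : gE H -> option (nat * nat)) (cv : gV H -> option (nat * nat))
  (emk : nat -> nat -> gE H).
Hypotheses
  (hce_src : forall {e j a}, ce e = Some (j, a) -> cv (gsrc e) = Some (j, a))
  (hce_tgt : forall {e j a}, ce e = Some (j, a) -> cv (gtgt e) = Some (j, (a.+1 %% MM)%N))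
  (hce_len : forall {e j a}, ce e = Some (j, a) -> glen e = ell j)
  (hce_rng : forall {e j a}, ce e = Some (j, a) -> (j < r)%N /\ (a < MM)%N)
  (hce_none : forall {e}, ce e = None -> cv (gsrc e) = None /\ cv (gtgt e) = None)
  (hemk : forall {j a}, (j < r)%N -> (a < MM)%N -> ce (emk j a) = Some (j, a))
  (hce_inj : forall {e e' x}, ce e = Some x -> ce e' = Some x -> e = e')
  (hcv_inj : forall {v v' x}, cv v = Some x -> cv v' = Some x -> v = v').

Definition LL j0 : R := (MM%:R * ell j0).

Definition phi (j0 : nat) (c : R) (x : point H) : R :=
  match x with
  | Vtx v => if cv v is Some (j, a) then
               (if j == j0 then gfun (LL j0) c (a%:R * ell j0) else LL j0 + s)
             else LL j0 + s
  | Inn e t => if ce e is Some (j, a) then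
               (if j == j0 then gfun (LL j0) c (a%:R * ell j0 + t) else LL j0 + s)
             else LL j0 + s
  end.

Lemma phi_pt {j0 c e j a t} : 0 <= c <= LL j0 -> ce e = Some (j, a) -> 0 <= t <= glen e ->
  phi j0 c (pt e t) = if j == j0 then gfun (LL j0) c (a%:R * ell j0 + t) else LL j0 + s.
Proof.
move=> /andP[c0 cL] he /andP[t0 tl]; rewrite /pt.
case: ifP => [t0'|_].
  have -> : t = 0 by apply/le_anti; rewrite t0 t0'.
  by rewrite /= (hce_src he) addr0.
case: ifP => [tl'|tl'] /=; last first.
  by rewrite he.
have -> : t = ell j by apply/le_anti; rewrite -(hce_len he) tl tl'.
rewrite (hce_tgt he); case: eqP => // ->.
have [_ aM] := hce_rng he.
have : (a.+1 < MM)%N \/ a.+1 = MM by lia.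
case=> [lt|eq].
  by rewrite modn_small // -addn1 natrD mulrDl mul1r.
rewrite eq modnn mul0r.
have -> : a%:R * ell j0 + ell j0 = LL j0 by rewrite /LL -eq -addn1 natrD mulrDl mul1r.
rewrite /gfun sub0r normrN !ger0_norm // ?subr_ge0 //.
have -> : LL j0 - (LL j0 - c) = c by ring.
by rewrite minC.
Qed.

Lemma phi_pt_none {j0 c e t} : ce e = None -> phi j0 c (pt e t) = LL j0 + s.
Proof.
move=> he; have [h1 h2] := hce_none he; rewrite /pt.
case: ifP => _; first by rewrite /= h1.
by case: ifP => _ /=; rewrite ?h2 ?he.
Qed.

Lemma phi_lip j0 c : 0 <= c <= LL j0 ->
  forall e a b, 0 <= a <= glen e -> 0 <= b <= glen e ->
     `|phi j0 c (pt e b) - phi j0 c (pt e a)| <= `|b - a|.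
Proof.
move=> hc e a b ha hb.
case he : (ce e) => [[j a0]|].
  rewrite !(phi_pt hc he) //; case: eqP => _; last by rewrite subrr normr0.
  apply: le_trans (gfun_lip _ _ _ _) _.
  by have -> : a0%:R * ell j0 + b - (a0%:R * ell j0 + a) = b - a by ring.
by rewrite !phi_pt_none // subrr normr0.
Qed.

Lemma walk_phi {j0 c} {p : seq (seg H)} {x y} : 0 <= c <= LL j0 -> walk x y p ->
  `|phi j0 c y - phi j0 c x| <= plen p.
Proof. by move=> hc; apply: walk_lip; apply: phi_lip. Qed.

Lemma Dform a1 a2 : (a1 < MM)%N -> (a2 < MM)%N ->
  ((a2 + MM - a1) %% MM = if (a1 <= a2)%N then a2 - a1 else MM - (a1 - a2))%N.
Proof.
move=> h1 h2; case: leqP => h.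
  have -> : (a2 + MM - a1 = (a2 - a1) + MM)%N by lia.
  by rewrite modnDr modn_small //; lia.
have -> : (a2 + MM - a1 = MM - (a1 - a2))%N by lia.
by rewrite modn_small //; lia.
Qed.

Lemma Dadd a1 a2 : (a1 < MM)%N -> (a2 < MM)%N ->
  ((a1 + (a2 + MM - a1) %% MM) %% MM = a2)%N.
Proof.
move=> h1 h2; rewrite Dform //; case: leqP => h.
  by rewrite modn_small //; lia.
have -> : (a1 + (MM - (a1 - a2)) = a2 + MM)%N by lia.
by rewrite modnDr modn_small.
Qed.

Lemma modfar a a' u u' q : (a < MM)%N -> (a' < MM)%N -> (u' <= u)%N -> (u <= q)%N ->
  (q < MM)%N -> ((a + u) %% MM = (a' + u') %% MM)%N -> ((a' + MM - a) %% MM <= q)%N.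
Proof.
move=> ha ha' hu huq hq heq.
have hD := Dadd _ _ ha ha'.
set D := ((a' + MM - a) %% MM)%N in hD *.
have DM : (D < MM)%N by rewrite ltn_mod MM_pos.
have h1 : (a + (u - u') == a' %[mod MM])%N.
  rewrite -(eqn_modDr u'); rewrite -addnA subnK //; exact/eqP.
have h2 : (a + D == a + (u - u') %[mod MM])%N.
  by rewrite hD (eqP h1) modn_small.
have uM : (u - u' < MM)%N by apply: leq_ltn_trans hq; apply: leq_trans huq; apply: leq_subr.
rewrite eqn_modDl (modn_small DM) (modn_small uM) in h2.
by rewrite (eqP h2); apply: leq_trans huq; apply: leq_subr.
Qed.

Lemma sum_mm : (\sum_(j < rp) (mm j).-1 = n.-1)%N.
Proof.
have h1 := rp_ge1; have [_ h2] := rp_le.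
rewrite -(prednK h1) big_ord_recl /= /mm /=.
under eq_bigr do rewrite /bump /=.
rewrite sum_nat_const card_ord /KK muln1; lia.
Qed.

Lemma chain d : forall e j a, ce e = Some (j, a) ->
  exists e' (p : seq (seg H)), [/\ ce e' = Some (j, ((a + d.+1) %% MM)%N),
    walk (Vtx (gtgt e)) (Vtx (gsrc e')) p & plen p = d%:R * ell j].
Proof.
have MMp := MM_pos.
elim: d => [|d IH] e j a he.
  have [jr aM] := hce_rng he.
  have hm : (((a + 1) %% MM) < MM)%N by rewrite ltn_mod.
  exists (emk j ((a + 1) %% MM)), [::]; split.
  - by rewrite hemk.
  - congr Vtx; apply: (hcv_inj (hce_tgt he)); rewrite addn1.
    have hm' : (a.+1 %% MM < MM)%N by rewrite ltn_mod.
    exact: (hce_src (hemk jr hm')).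
  - by rewrite plen_nil mul0r.
have [e'' [p'' [he'' w'' pl'']]] := IH _ _ _ he.
have [jr aM] := hce_rng he.
have hm : (((a + d.+2) %% MM) < MM)%N by rewrite ltn_mod.
exists (emk j ((a + d.+2) %% MM)), (p'' ++ [:: Seg e'' 0 (glen e'')]); split.
- by rewrite hemk.
- apply: walk_cat w'' _ => /=; split.
  + by rewrite lexx /= ltW // glen_pos.
  + by rewrite lexx andbT ltW // glen_pos.
  + by rewrite pt0.
  + rewrite ptl; congr Vtx; apply: (hcv_inj (hce_tgt he'')).
    rewrite (hce_src (hemk jr hm)).
    by rewrite -[((a + d.+1) %% MM).+1]addn1 modnDml -addnA addn1.
- rewrite plen_cat pl'' plen_cons plen_nil addr0 subr0 (hce_len he'').
  by rewrite ger0_norm ?(ltW (ell_pos _)) // -addn1 natrD mulrDl mul1r.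
Qed.

Lemma close e1 e2 j a1 a2 t1 t2 : ce e1 = Some (j, a1) -> ce e2 = Some (j, a2) ->
  lo j <= t1 <= hi j -> lo j <= t2 <= hi j ->
  (((a2 + MM - a1) %% MM) < qq j)%N ->
  (Dist (Inn e1 t1) (Inn e2 t2) < s%:E)%E.
Proof.
move=> he1 he2 /andP[t1l t1h] /andP[t2l t2h] hD.
have lp := ell_pos j; have se := s_ell j; have qge := qqR_ge j.
have s7 : 7 * ell j <= 4 * s by rewrite se ler_pM2r //; lra.
have [_ a1M] := hce_rng he1; have [_ a2M] := hce_rng he2.
have l1 := hce_len he1; have l2 := hce_len he2.
move: t1l t1h t2l t2h; rewrite /lo /hi => t1l t1h t2l t2h.
set D := ((a2 + MM - a1) %% MM)%N in hD.
have hDa : ((a1 + D) %% MM = a2)%N by apply: Dadd.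
have DR : (D%:R : R) <= (qq j)%:R - 1.
  have : (D.+1 <= qq j)%N := hD.
  by rewrite -(ler_nat R) -natr1 => h; lra.
have pI1 : pt e1 t1 = Inn e1 t1 by apply: ptI; rewrite ?l1; move: hs => ?; lra.
have pI2 : pt e2 t2 = Inn e2 t2 by apply: ptI; rewrite ?l2; move: hs => ?; lra.
case: (posnP D) => D0.
  have ea : a2 = a1.
    by move: hDa; rewrite D0 addn0 modn_small.
  have ee : e2 = e1 by apply: (hce_inj he2); rewrite he1 ea.
  rewrite ee in pI2 l2 *.
  apply: le_lt_trans (@Dist_le _ _ _ _ ([:: Seg e1 t1 t2]) _) _.
    split => /=; rewrite ?pI1 ?pI2 ?l1 //; apply/andP; split; lra.
  rewrite plen_cons plen_nil addr0 lte_fin.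
  have : `|t2 - t1| <= ell j / 4.
    by rewrite ler_norml; apply/andP; split; lra.
  move: hs => ?; lra.
have [e' [p [he' w pl]]] := chain D.-1 _ _ _ he1.
rewrite prednK // hDa in he'.
have ee := hce_inj he' he2; subst e'.
apply: le_lt_trans (@Dist_le _ _ _ _ (Seg e1 t1 (glen e1) :: (p ++ [:: Seg e2 0 t2])) _) _.
  split => /=.
  - rewrite l1; apply/andP; split; lra.
  - by rewrite lexx andbT ltW // glen_pos.
  - by rewrite pI1.
  - rewrite ptl; apply: walk_cat w _ => /=; split.
    + by rewrite lexx /= ltW // glen_pos.
    + rewrite l2; apply/andP; split; lra.
    + by rewrite pt0.
    + by rewrite pI2.
rewrite plen_cons plen_cat pl plen_cons plen_nil addr0 subr0 l1 lte_fin.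
rewrite /= !ger0_norm; try (rewrite ?subr_ge0; lra).
have DR' : (D.-1%:R : R) = D%:R - 1.
  by rewrite -[in RHS](prednK D0) -natr1 addrK.
rewrite DR'.
have : (D%:R - 1) * ell j <= ((qq j)%:R - 2) * ell j.
  by rewrite ler_pM2r //; lra.
move: hs => ? ? /=; lra.
Qed.

Definition piece (e : gE H) (j : nat) : set (point H) :=
  [set x | (exists2 eJ, eJ \in [:: (e, `[lo j, hi j])] &
             exists2 t, t \in eJ.2 & x = pt eJ.1 t)
           \/ (exists2 w, w \in ([::] : seq (gV H)) & x = Vtx w)].

Lemma pieceP e j x : piece e j x <-> exists2 t, lo j <= t <= hi j & x = pt e t.
Proof.
split.
  case=> [[eJ]|[w]]; last by rewrite in_nil.
  rewrite mem_seq1 => /eqP -> [t]; rewrite in_itv /= => ht ->.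
  by exists t.
move=> [t ht ->]; left; exists (e, `[lo j, hi j]); first by rewrite mem_seq1.
by exists t; rewrite ?in_itv.
Qed.

Lemma lohi j : 0 < lo j /\ lo j <= hi j /\ hi j < ell j.
Proof. have := ell_pos j; rewrite /lo /hi => h; split; [|split]; lra. Qed.

Lemma piece_is_piece e j a : ce e = Some (j, a) -> is_piece (piece e j).
Proof.
move=> he; exists [:: (e, `[lo j, hi j])], [::]; split => //.
move=> eJ; rewrite mem_seq1 => /eqP -> t; rewrite in_itv /= (hce_len he).
have [h1 [h2 h3]] := lohi j.
by case/andP => ? ?; apply/andP; split; lra.
Qed.

Lemma piece_conn e j a : ce e = Some (j, a) -> connected_piece (piece e j).
Proof.
move=> he x y /pieceP[t1 /andP[l1 h1] ->] /pieceP[t2 /andP[l2 h2] ->].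
have [ql [qlh qh]] := lohi j.
exists [:: Seg e t1 t2]; split.
  by split => //=; rewrite (hce_len he); apply/andP; split; lra.
move=> sg; case=> // <- t /= /andP[ht1 ht2]; apply/pieceP; exists t => //.
have : lo j <= Num.min t1 t2 by rewrite le_min l1 l2.
have : Num.max t1 t2 <= hi j by rewrite ge_max h1 h2.
move=> ? ?; apply/andP; split; [exact: le_trans ht1|exact: le_trans ht2 _].
Qed.

Variable w : 'I_n -> valuation H.
Hypothesis hw : forall (i : 'I_n) e A,
  vmu (w i) e A = if ce e is Some (j, a) then musel i j a A else 0%E.

Lemma piece_val (i : 'I_n) e j a : ce e = Some (j, a) -> (j < rp)%N ->
  (a %% qq j)%N = i -> ((ell j / 4)%:E <= val (w i) (piece e j))%E.
Proof.
move=> he hj ha; rewrite /val (bigD1 e) //=.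
apply: le_trans (leeDl _ _); last first.
  by apply: sume_ge0 => e' _; exact: measure_ge0.
rewrite hw he /musel hj ha eqxx /=.
have [ql [qlh qh]] := lohi j.
rewrite spot_full //; last first.
  move=> t /=; rewrite in_itv /= => /andP[h1 h2]; split.
    by rewrite (hce_len he); apply/andP; split; lra.
  by rewrite -ptI ?(hce_len he); [apply/pieceP; exists t => //; apply/andP|lra|lra].
by rewrite lee_fin /lo /hi; lra.
Qed.

Lemma piece_far e1 e2 j1 a1 j2 a2 : ce e1 = Some (j1, a1) -> ce e2 = Some (j2, a2) ->
  (j1 <> j2 \/ (j1 = j2 /\
     (qq j1)%:R <= `|(a2%:R : R) - a1%:R| <= MM%:R - (qq j1)%:R)) ->
  (s%:E <= DistS (piece e1 j1) (piece e2 j2))%E.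
Proof.
move=> he1 he2 hcase.
apply: DistS_ge => x y /pieceP[t1 /andP[t1l t1h] ->] /pieceP[t2 /andP[t2l t2h] ->].
apply: Dist_ge => p wp.
have lp := ell_pos j1; have se := s_ell j1; have qge := qqR_ge j1.
have [_ a1M] := hce_rng he1.
have MR : (a1%:R : R) + 1 <= MM%:R by rewrite natr1 ler_nat.
have M1 : (1 : R) <= MM%:R by rewrite (ler_nat R 1); exact: MM_pos.
move: t1l t1h t2l t2h; rewrite /lo /hi => t1l t1h t2l t2h.
set c := a1%:R * ell j1 + ell j1 / 2.
have hc : 0 <= c <= LL j1.
  apply/andP; split.
    by rewrite /c; apply: addr_ge0; [apply: mulr_ge0 => //; apply: ltW|lra].
  have : (a1%:R + 1) * ell j1 <= MM%:R * ell j1 by rewrite ler_pM2r.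
  by rewrite /LL /c; lra.
have wl := walk_phi hc wp.
have t1r : 0 <= t1 <= glen e1 by rewrite (hce_len he1); apply/andP; split; lra.
have t2r : 0 <= t2 <= glen e2 by rewrite (hce_len he2); apply/andP; split; lra.
rewrite (phi_pt hc he1 t1r) eqxx in wl.
have px : gfun (LL j1) c (a1%:R * ell j1 + t1) <= ell j1 / 8.
  rewrite /gfun ge_min; apply/orP; left.
  have -> : a1%:R * ell j1 + t1 - c = t1 - ell j1 / 2 by rewrite /c; ring.
  by rewrite ler_norml; apply/andP; split; lra.
rewrite (phi_pt hc he2 t2r) in wl.
case: hcase => [jne|[jeq hq]].
  have jf : (j2 == j1) = false by apply/eqP => h; apply: jne.
  rewrite jf in wl.
  have := ler_norm (LL j1 + s - gfun (LL j1) c (a1%:R * ell j1 + t1)).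
  have : ell j1 <= LL j1 by rewrite /LL ler_pMl.
  move=> ? ?; move: hs => ?; lra.
subst j2; rewrite eqxx in wl.
have := ler_norm (gfun (LL j1) c (a2%:R * ell j1 + t2) - gfun (LL j1) c (a1%:R * ell j1 + t1)).
set d := `|(a2%:R : R) - a1%:R|.
have hd : `| `|a2%:R * ell j1 + t2 - c| - d * ell j1 | <= ell j1 / 8.
  have -> : d * ell j1 = `|((a2%:R : R) - a1%:R) * ell j1|.
    by rewrite normrM (gtr0_norm lp).
  apply: le_trans (ler_dist_dist _ _) _.
  have -> : a2%:R * ell j1 + t2 - c - ((a2%:R - a1%:R) * ell j1) = t2 - ell j1 / 2.
    by rewrite /c; ring.
  by rewrite ler_norml; apply/andP; split; lra.
move: hd; rewrite ler_norml => /andP[hd1 hd2].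
move: hq => /andP[hq1 hq2].
have hh1 : (qq j1)%:R * ell j1 <= d * ell j1 by rewrite ler_pM2r.
have hh2 : d * ell j1 <= (MM%:R - (qq j1)%:R) * ell j1 by rewrite ler_pM2r.
have py : (qq j1)%:R * ell j1 - ell j1 / 8 <= gfun (LL j1) c (a2%:R * ell j1 + t2).
  rewrite /gfun le_min; apply/andP; split; rewrite /LL; lra.
move=> ?; rewrite /LL in py *; lra.
Qed.

Lemma ad_far (i : 'I_n) p p' : (p < kk)%N -> (p' < kk)%N -> p != p' -> jd p = jd p' ->
  (qq (jd p))%:R <= `|((ad i p')%:R : R) - (ad i p)%:R| <= MM%:R - (qq (jd p))%:R.
Proof.
move=> hp hp' hne hj.
have hb : bd p != bd p' by apply/eqP => hb; move/eqP: hne; apply; apply: jd_bd_inj.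
have hbl := bd_lt _ hp; have hbl' := bd_lt _ hp'; rewrite -hj in hbl'.
have := @nat_dist _ _ _ hbl hbl' hb; move=> /andP[B1 B2].
have qp : (0 : R) < (qq (jd p))%:R by have := qqR_ge (jd p); lra.
have -> : ((ad i p')%:R : R) - (ad i p)%:R =
          ((bd p')%:R - (bd p)%:R) * (qq (jd p))%:R.
  by rewrite /ad hj !natrD !natrM; ring.
rewrite normrM (gtr0_norm qp) (MM_eq (jd p)) natrM.
set B := `|_ - _|; set q := (qq (jd p))%:R; set m := (mm (jd p))%:R.
have h1 : 1 * q <= B * q by rewrite ler_pM2r.
have h2 : B * q <= (m - 1) * q by rewrite ler_pM2r.
apply/andP; split; lra.
Qed.

Lemma MMS_pos (i : 'I_n) : (0 < MMS (w i) kk s)%E.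
Proof.
pose E (p : 'I_kk) := emk (jd p) (ad i p).
have hE (p : 'I_kk) : ce (E p) = Some (jd p, ad i p).
  apply: hemk; last exact: ad_lt.
  by apply: leq_trans (jd_lt _ (ltn_ord p)) _; have [] := rp_le.
pose P (p : 'I_kk) := piece (E p) (jd p).
have sepP : separated s P.
  split.
    by move=> p; split; [apply: piece_is_piece _ _ _ (hE p)|apply: piece_conn _ _ _ (hE p)].
  move=> p p' hpp'.
  have far : (s%:E <= DistS (P p) (P p'))%E.
    apply: piece_far _ _ _ _ _ _ (hE p) (hE p') _.
    case: (eqVneq (jd p) (jd p')) => hj; last by left; apply/eqP.
    right; split => //; apply: ad_far => //; by rewrite ?ltn_ord.
  split => //; apply/seteqP; split => // x [h1 h2].
  have := le_trans far (DistS_le h1 h2).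
  have := Dist_le (x := x) (y := x) (p := [::]) erefl.
  rewrite plen_nil => h3 h4; have := le_trans h4 h3; rewrite lee_fin => h5.
  by move: hs; rewrite ltNge h5.
have pos : (0 < \big[Order.min/+oo%E]_(p < kk) val (w i) (P p))%E.
  apply: (big_ind (fun x => 0 < x)%E) => //.
    by move=> x y hx hy; rewrite lt_min hx hy.
  move=> p _; apply: lt_le_trans (piece_val _ _ _ _ (hE p) (jd_lt _ (ltn_ord p)) (ad_mod i p)).
  by rewrite lte_fin; have := ell_pos (jd p); lra.
apply: lt_le_trans pos _.
by apply: ereal_sup_ubound; exists P.
Qed.

Lemma val_pos_pt (i : 'I_n) (X : set (point H)) : (0 < val (w i) X)%E ->
  exists x : gE H * nat * nat * R, [/\ ce x.1.1.1 = Some (x.1.1.2, x.1.2),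
     (x.1.1.2 < rp)%N, (x.1.2 %% qq x.1.1.2)%N = i,
     lo x.1.1.2 <= x.2 <= hi x.1.1.2 & X (Inn x.1.1.1 x.2)].
Proof.
move=> h; apply: contrapT => hno.
suff : val (w i) X = 0%E by move=> h0; rewrite h0 ltxx in h.
rewrite /val big1 // => e _; rewrite hw.
case he : (ce e) => [[j a]|] //.
rewrite /musel; case: ifP => [/andP[hj /eqP ha]|_]; last by [].
apply: contrapT => hne; have [t [[_ Xt] ht]] := @spot_ex _ _ _ _ hne.
by apply: hno; exists (e, j, a, t); split.
Qed.

Lemma no_alloc : ~ exists A : 'I_n -> set (point H),
  sep_alloc s A /\ forall i, (MMS (w i) kk s <= val (w i) (A i))%E.
Proof.
case=> A [[_ hsep] hA].
have hpt i := val_pos_pt i _ (lt_le_trans (MMS_pos i) (hA i)).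
have [f hf] := boolp.choice hpt.
pose E i := (f i).1.1.1; pose J i := (f i).1.1.2; pose Aa i := (f i).1.2.
pose T i := (f i).2.
have hE i : ce (E i) = Some (J i, Aa i) by case: (hf i).
have hJ i : (J i < rp)%N by case: (hf i).
have hAa i : (Aa i %% qq (J i))%N = i by case: (hf i).
have hT i : lo (J i) <= T i <= hi (J i) by case: (hf i).
have hX i : A i (Inn (E i) (T i)) by case: (hf i).
have aM i : (Aa i < MM)%N by have [] := hce_rng (hE i).
have hfar i i' : i != i' -> J i = J i' -> ((qq (J i)).+1 <= (Aa i' + MM - Aa i) %% MM)%N.
  move=> hne hj; rewrite ltnNge; apply/negP => hle.
  rewrite leq_eqVlt in hle; case/orP: hle => [/eqP hq|hlt].
    have hD := Dadd _ _ (aM i) (aM i').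
    rewrite hq in hD.
    have : (Aa i' %% qq (J i) = Aa i %% qq (J i))%N.
      rewrite -hD (@modn_dvdm MM); first by rewrite modnDr.
      by rewrite (MM_eq (J i)) dvdn_mull.
    rewrite hAa {1}hj hAa => /val_inj/eqP; by rewrite eq_sym (negbTE hne).
  have hE' : ce (E i') = Some (J i, Aa i') by rewrite hj; exact: hE.
  have hT' : lo (J i) <= T i' <= hi (J i) by rewrite hj; exact: hT.
  have hs2 := close _ _ _ _ _ _ _ (hE i) hE' (hT i) hT' hlt.
  have := (hsep i i' hne).2 => hs1.
  have := le_lt_trans (le_trans hs1 (DistS_le (hX i) (hX i'))) hs2.
  by rewrite ltxx.
pose J' i : 'I_rp := Ordinal (hJ i).
have hcount (j0 : 'I_rp) : (#|[pred i | J' i == j0]| <= (mm j0).-1)%N.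
  set q := qq j0.
  have qM : (q < MM)%N := qq_lt_MM j0.
  pose g (x : {i : 'I_n | J' i == j0} * 'I_q.+1) : 'I_MM :=
    Ordinal (ltn_pmod (Aa (sval x.1) + x.2) MM_pos).
  have ginj : injective g.
    move=> [[i hi] u] [[i' hi'] u'] /(congr1 (@nat_of_ord MM)) /= heq.
    have ji : J i = j0 by move/eqP: hi => <-.
    have ji' : J i' = j0 by move/eqP: hi' => <-.
    have hu : (u <= q)%N by rewrite -ltnS.
    have hu' : (u' <= q)%N by rewrite -ltnS.
    case: (eqVneq i i') => hii.
      subst i'.
      have : (u == u' %[mod MM])%N by rewrite -(eqn_modDl (Aa i)); apply/eqP.
      rewrite !modn_small; last 2 first.
        - by apply: leq_ltn_trans hu' qM.
        - by apply: leq_ltn_trans hu qM.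
      move=> /eqP /val_inj huu; subst u'.
      by congr (_, _); apply: val_inj.
    exfalso.
    case: (leqP u' u) => huu.
      have h2 := modfar _ _ _ _ _ (aM i) (aM i') huu hu qM heq.
      have h1 := hfar i i' hii (etrans ji (esym ji')).
      rewrite ji in h1.
      by have := leq_trans h1 h2; rewrite ltnn.
    have h2 := modfar _ _ _ _ _ (aM i') (aM i) (ltnW huu) hu' qM (esym heq).
    have hii' : i' != i by rewrite eq_sym.
    have h1 := hfar i' i hii' (etrans ji' (esym ji)).
    rewrite ji' in h1.
    by have := leq_trans h1 h2; rewrite ltnn.
  have := @leq_card _ _ g ginj.
  rewrite card_prod card_sig card_ord card_ord (MM_eq j0) -/q.
  have := KK_ge2; rewrite /mm; case: (j0 : nat) => [|jj] /= h1; nia.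
have : (n <= n.-1)%N.
  rewrite -sum_mm.
  have -> : n = #|'I_n| by rewrite card_ord.
  rewrite -sum1_card (partition_big J' predT) //=.
  apply: leq_sum => j0 _.
  by rewrite sum1_card; apply: hcount.
by case: n hn => // m _; rewrite ltnn.
Qed.

End OnH.
Definition rr := r.-1.+1.
Definition Mp := MM.-1.
Lemma rrE : rr = r. Proof. by rewrite /rr prednK. Qed.
Lemma MpE : Mp.+1 = MM. Proof. by rewrite /Mp prednK // MM_pos. Qed.
Lemma MM_ge3 : (2 < MM)%N.
Proof. have := KK_ge2; rewrite /MM; nia. Qed.

Definition Vt := ('I_rr * 'I_Mp.+1)%type.
Definition Gc : graph R :=
  @Graph R Vt Vt (fun e => e) (fun e => (e.1, ordS e.2))
    (fun e => ell e.1) (fun e => ell_pos e.1).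

Lemma musel_fin (i j a : nat) : (musel i j a `]0%R, ell j[%classic < +oo)%E.
Proof.
rewrite /musel; case: ifP => _; last exact: ltry.
have [h1 [h2 h3]] := lohi j.
rewrite spot_full //; first exact: ltry.
move=> t /=; rewrite !in_itv /= => /andP[? ?].
by apply/andP; split; lra.
Qed.

Lemma musel_na (i j a : nat) (x : R) : musel i j a [set x] = 0%E.
Proof. by rewrite /musel; case: ifP => _; [exact: spot_set1|]. Qed.

Definition vG (i : 'I_n) : valuation Gc :=
  @Valuation R Gc (fun e => musel i e.1 e.2) (fun e => musel_fin i e.1 e.2)
    (fun e x => musel_na i e.1 e.2 x).

Lemma ordSS (a : 'I_Mp.+1) : ordS (ordS a) != a.
Proof.
apply/eqP => /(congr1 (@nat_of_ord _)) /=.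
have := MM_ge3; rewrite -MpE => h3.
have aM := ltn_ord a.
have [lt|ge] := ltnP a.+1 Mp.+1.
  rewrite (modn_small lt).
  have [lt2|ge2] := ltnP a.+2 Mp.+1; first by rewrite modn_small //; lia.
  have -> : (a.+2 = (a.+2 - Mp.+1) + Mp.+1)%N by lia.
  by rewrite modnDr modn_small; lia.
have -> : (a.+1 = Mp.+1)%N by lia.
by rewrite modnn modn_small; lia.
Qed.

Lemma next_enum (a : 'I_Mp.+1) : next (enum 'I_Mp.+1) a = ordS a.
Proof.
apply: val_inj => /=.
rewrite next_nth mem_enum index_enum_ord enum_ordSl /=.
have hsz : size (map (lift ord0) (enum 'I_Mp)) = Mp by rewrite size_map size_enum_ord.
have [lt|ge] := ltnP a Mp.
  have -> : nth ord0 [seq lift ord0 i | i <- enum 'I_Mp] a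
          = nth ord0 (enum 'I_Mp.+1) a.+1 by rewrite enum_ordSl.
  by rewrite nth_enum_ord // modn_small.
rewrite nth_default ?hsz //.
have -> : a = Mp :> nat by have := ltn_ord a; lia.
by rewrite modnn.
Qed.

Lemma cycleG : cycle_union Gc r.
Proof.
exists [seq [seq ((j, a) : gV Gc) | a <- enum 'I_Mp.+1] | j <- enum 'I_rr]; split.
- by rewrite size_map size_enum_ord rrE.
- apply/allP => c /mapP[j _ ->]; rewrite size_map size_enum_ord MpE; exact: MM_ge3.
- apply: allpairs_uniq; rewrite ?enum_uniq //.
  by move=> [x1 y1] [x2 y2] _ _ /= [-> ->].
- by move=> [j a]; apply/allpairsP; exists (j, a); rewrite !mem_enum.
split.
  move=> [j a]; exists [seq ((j, b) : gV Gc) | b <- enum 'I_Mp.+1].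
    by apply: map_f; rewrite mem_enum.
  split; first by apply: (map_f (fun b => (j, b))); rewrite mem_enum.
  left; rewrite /= (next_map (h := fun b => (j, b))) ?enum_uniq ?next_enum //.
  by move=> b1 b2 [].
move=> c x /mapP[j _ ->] /mapP[a _ ->].
rewrite (next_map (h := fun b => ((j, b) : gV Gc))) ?enum_uniq ?next_enum //;
  last by move=> b1 b2 [].
exists (j, a); split; first by left.
move=> e' [[/= -> _] //|[/= he1 he2]].
exfalso; move: he2; rewrite he1 /= => [[]] /eqP; apply/negP; exact: ordSS.
Qed.

Lemma no_alloc_G : ~ exists A : 'I_n -> set (point Gc),
  sep_alloc s A /\ forall i, (MMS (vG i) kk s <= val (vG i) (A i))%E.
Proof.
apply: (@no_alloc Gc (fun e => Some (nat_of_ord e.1, nat_of_ord e.2))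
                     (fun v => Some (nat_of_ord v.1, nat_of_ord v.2))
                     (fun j a => (inord j, inord a))).
- by move=> e j a.
- by move=> [e1 e2] j a /= [<- <-]; rewrite -MpE.
- by move=> [e1 e2] j a /= [<- _].
- move=> [e1 e2] j a /= [<- <-]; split; first by rewrite -rrE.
  by rewrite -MpE.
- by [].
- move=> j a hj ha /=; rewrite !inordK ?MpE ?(prednK hr) //.
- move=> [e1 e2] [e1' e2'] x /= <- [h1 h2].
  by congr (_, _); apply: val_inj.
- move=> [e1 e2] [e1' e2'] x /= <- [h1 h2].
  by congr (_, _); apply: val_inj.
- by [].
Qed.

Lemma no_alloc_F (F : graph R) : ~ exists A : 'I_n -> set (point (gsum Gc F)),
  sep_alloc s A /\ forall i, (MMS (ext_val F (vG i)) kk s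
                              <= val (ext_val F (vG i)) (A i))%E.
Proof.
apply: (@no_alloc (gsum Gc F)
   (fun e => if e is inl e then Some (nat_of_ord e.1, nat_of_ord e.2) else None)
   (fun v => if v is inl v then Some (nat_of_ord v.1, nat_of_ord v.2) else None)
   (fun j a => inl (inord j, inord a))).
- by move=> [e|e] j a.
- by move=> [[e1 e2]|e] j a //= [<- <-]; rewrite -MpE.
- by move=> [[e1 e2]|e] j a //= [<- _].
- move=> [[e1 e2]|e] j a //= [<- <-]; split; first by rewrite -rrE.
  by rewrite -MpE.
- by move=> [e|e].
- move=> j a hj ha /=; rewrite !inordK ?MpE ?(prednK hr) //.
- move=> [[e1 e2]|e] [[e1' e2']|e'] x //= <- [h1 h2].
  by congr (inl (_, _)); apply: val_inj.
- move=> [[e1 e2]|e] [[e1' e2']|e'] x //= <- [h1 h2].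
  by congr (inl (_, _)); apply: val_inj.
- by move=> i [e|e] A.
Qed.

End Construction.

Theorem theorem5 (R : realType) (s : R) (n r : nat) :
  0 < s -> (2 <= n)%N -> (1 <= r)%N ->
  exists (G : graph R) (v : 'I_n -> valuation G),
    cycle_union G r /\
    (~ exists A : 'I_n -> set (point G),
         sep_alloc s A /\
         forall i, (MMS (v i) (minn (n + r) (2 * n - 1)).-1 s <= val (v i) (A i))%E) /\
    (forall F : graph R, acyclic F ->
       ~ exists A : 'I_n -> set (point (gsum G F)),
           sep_alloc s A /\
           forall i, (MMS (ext_val F (v i)) (minn (n + r) (2 * n - 1)).-1 s
                       <= val (ext_val F (v i)) (A i))%E).
Proof.
move=> hs hn hr.
exists (Gc R s n r hs hn hr), (vG R s n r hs hn hr).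
split; first exact: (cycleG R s n r hs hn hr).
split; first exact: (no_alloc_G R s n r hs hn hr).
by move=> F _; exact: (no_alloc_F R s n r hs hn hr F).
Qed.
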